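(* Let $\gamma$ be an oriented geodesic on the modular surface $\Sigma_{\mathrm{Mod}}$ obtained by projecting the simple closed curve $p/q\subset\Sigma_{1,1}$ via the 6-fold covering map $\Sigma_{1,1}\to\Sigma_{\mathrm{Mod}}$. Then under the covering map, $\gamma$ has six lifts in $\Sigma_{1,1}$: the curves $p/q$, $q/(q-p)$, $(p-q)/p$, and each of these three curves oriented in the opposite direction.
   Context: $\Sigma_{\mathrm{Mod}}=\mathbb{H}^2/\mathrm{PSL}(2,\mathbb{Z})$. The once-punctured torus $\Sigma_{1,1}$ is viewed as a quotient of $\mathbb{R}^2$ tiled by equilateral triangles with the vertex lattice $\Lambda$ removed, modulo the translations along two edge directions; the curve $p/q$ (coprime, $1/0$ allowed) is the projection of a line of slope $p/q$ avoiding $\Lambda$, measured with respect to the two edge directions as coordinate axes. The 6-fold covering $\Sigma_{1,1}\to\Sigma_{\mathrm{Mod}}$ is the quotient by the group generated by the rotation of order three about the centre of a triangle and the rotation of order two about the midpoint of an edge. *)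

(* Defs.v *)
From Stdlib Require Import Reals ZArith List.
Open Scope R_scope.

(* Points of the plane R^2, written in coordinates (x, y) meaning
   x * e1 + y * e2, where e1, e2 are unit vectors along two edge
   directions of the equilateral triangle tiling, e1 at angle 0 and
   e2 at angle 120 degrees (so e1 + e2 is also an edge direction, at 60 deg).
   The vertex lattice Lambda is Z e1 + Z e2. *)
Definition pt := (R * R)%type.

Definition in_lattice (x : pt) : Prop :=
  exists m n : Z, x = (IZR m, IZR n).

(* Rotation of order three (by +120 degrees) about the centre (2/3, 1/3)
   of the triangle with vertices 0, e1, e1 + e2. *)
Definition rho (x : pt) : pt := (1 - snd x, fst x - snd x).

(* Rotation of order two about the midpoint (1/2, 0) of the edge [0, e1]. *)
Definition sigma (x : pt) : pt := (1 - fst x, - snd x).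

Definition transl (m n : Z) (x : pt) : pt := (fst x + IZR m, snd x + IZR n).

(* The group of plane isometries generated by Lambda-translations, rho and
   sigma: these are exactly the lifts to R^2 of the deck transformations of
   the 6-fold covering Sigma_{1,1} -> Sigma_Mod (Lambda-translations act
   trivially on Sigma_{1,1}).  Closure under composition suffices since all
   generators have finite order or have inverses among the generators. *)
Inductive deck : (pt -> pt) -> Prop :=
| deck_rho : deck rho
| deck_sigma : deck sigma
| deck_trans (m n : Z) : deck (transl m n)
| deck_comp (f g : pt -> pt) : deck f -> deck g -> deck (fun x => f (g x)).

(* Its projection to Sigma_{1,1} is an oriented simple closed curve; its
   (oriented, free homotopy) class depends only on v up to positive scaling. *)
Definition represents (v : Z * Z) (l : R -> pt) : Prop :=
  exists (u1 u2 k : R), 0 < k /\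
    (forall t, l t = (u1 + t * k * IZR (fst v), u2 + t * k * IZR (snd v))) /\
    (forall t, ~ in_lattice (l t)).

(* The oriented curve p/q: slope p/q w.r.t. the edge axes, i.e. direction
   vector q e1 + p e2.  The opposite orientation is the negated vector. *)
Definition slope_dir (p q : Z) : Z * Z := (q, p).
Definition rev_dir (v : Z * Z) : Z * Z := ((- fst v)%Z, (- snd v)%Z).

(* The oriented curve with primitive direction v in Sigma_{1,1} is a lift of
   gamma = projection of the oriented curve p/q to Sigma_Mod iff some lift of
   a deck transformation carries a line representing p/q onto a line
   representing v (preserving orientation). *)
Definition is_lift (p q : Z) (v : Z * Z) : Prop :=
  exists (l : R -> pt) (g : pt -> pt),
    represents (slope_dir p q) l /\ deck g /\ represents v (fun t => g (l t)).

(* Main.v *)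
Require Import Defs.
From Stdlib Require Import Reals ZArith List Lra Lia Psatz.
Import ListNotations.

Definition M := (Z * Z * Z * Z)%type.
Definition mmul (A B : M) : M :=
  let '(a,b,c,d) := A in let '(a',b',c',d') := B in
  ((a*a'+b*c')%Z, (a*b'+b*d')%Z, (c*a'+d*c')%Z, (c*b'+d*d')%Z).
Definition app (A : M) (x : pt) : pt :=
  let '(a,b,c,d) := A in
  (IZR a * fst x + IZR b * snd x, IZR c * fst x + IZR d * snd x).
Definition appZ (A : M) (x : Z * Z) : Z * Z :=
  let '(a,b,c,d) := A in
  ((a * fst x + b * snd x)%Z, (c * fst x + d * snd x)%Z).
Definition padd (x y : pt) : pt := (fst x + fst y, snd x + snd y).

Definition G6 : list M :=
  [(1,0,0,1); (0,-1,1,-1); (-1,1,-1,0); (-1,0,0,-1); (0,1,-1,1); (1,-1,1,0)]%Z.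

Definition meqb (A B : M) : bool :=
  let '(a,b,c,d) := A in let '(a',b',c',d') := B in
  (Z.eqb a a' && Z.eqb b b' && Z.eqb c c' && Z.eqb d d')%bool.
Definition inb (A : M) (l : list M) := existsb (meqb A) l.

Lemma meqb_eq A B : meqb A B = true -> A = B.
Proof.
  destruct A as [[[a b] c] d]; destruct B as [[[a' b'] c'] d']; simpl.
  intro H. repeat rewrite Bool.andb_true_iff in H.
  destruct H as [[[H1 H2] H3] H4].
  apply Z.eqb_eq in H1, H2, H3, H4. subst; reflexivity.
Qed.

Lemma inb_In A l : inb A l = true -> In A l.
Proof.
  induction l; simpl; [discriminate|].
  intro H; apply Bool.orb_true_iff in H; destruct H as [H|H].
  - left; symmetry; apply meqb_eq; auto.
  - right; auto.
Qed.

Lemma G6_closed : forallb (fun A => forallb (fun B => inb (mmul A B) G6) G6) G6 = true.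
Proof. reflexivity. Qed.

Lemma G6_mul A B : In A G6 -> In B G6 -> In (mmul A B) G6.
Proof.
  intros HA HB. apply inb_In.
  pose proof G6_closed as H. rewrite forallb_forall in H.
  specialize (H A HA). rewrite forallb_forall in H. apply H; auto.
Qed.

Definition I2 : M := (1,0,0,1)%Z.

Lemma G6_inv_check : forallb (fun A => existsb (fun B => meqb (mmul B A) I2) G6) G6 = true.
Proof. reflexivity. Qed.

Lemma G6_inv A : In A G6 -> exists B, mmul B A = I2.
Proof.
  intro HA. pose proof G6_inv_check as H. rewrite forallb_forall in H.
  specialize (H A HA). apply existsb_exists in H. destruct H as [B [_ HB]].
  exists B. apply meqb_eq; auto.
Qed.

Lemma app_padd A x y : app A (padd x y) = padd (app A x) (app A y).
Proof. destruct A as [[[a b] c] d]; destruct x, y; unfold app, padd; simpl; f_equal; ring. Qed.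

Lemma app_mul A B x : app A (app B x) = app (mmul A B) x.
Proof.
  destruct A as [[[a b] c] d]; destruct B as [[[a' b'] c'] d']; destruct x; unfold app; simpl.
  rewrite !plus_IZR, !mult_IZR. f_equal; ring.
Qed.

Definition aff (g : pt -> pt) : Prop :=
  exists A c, In A G6 /\ forall x, g x = padd (app A x) c.

Lemma deck_aff g : deck g -> aff g.
Proof.
  induction 1.
  - exists (0,-1,1,-1)%Z, (1,0). split; [simpl; tauto|].
    intros [x y]; unfold rho, app, padd; simpl; f_equal; ring.
  - exists (-1,0,0,-1)%Z, (1,0). split; [simpl; tauto|].
    intros [x y]; unfold Defs.sigma, app, padd; simpl. f_equal; ring.
  - exists (1,0,0,1)%Z, (IZR m, IZR n). split; [simpl; tauto|].
    intros [x y]; unfold transl, app, padd; simpl; f_equal; ring.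
  - destruct IHdeck1 as [A [c [HA Hf]]]. destruct IHdeck2 as [B [c' [HB Hg]]].
    exists (mmul A B), (padd (app A c') c). split; [apply G6_mul; auto|].
    intro x. rewrite Hf, Hg, app_padd, app_mul.
    destruct x, c, c'; unfold padd; simpl; f_equal; ring.
Qed.

Lemma deck_lat g : deck g -> forall x, in_lattice (g x) -> in_lattice x.
Proof.
  induction 1; intros [x y] [a [b Hab]].
  - unfold rho in Hab; simpl in Hab. injection Hab as H1 H2.
    exists (b + (1 - a))%Z, (1 - a)%Z. rewrite plus_IZR, minus_IZR. f_equal; lra.
  - unfold Defs.sigma in Hab; simpl in Hab. injection Hab as H1 H2.
    exists (1 - a)%Z, (- b)%Z. rewrite minus_IZR, opp_IZR. f_equal; lra.
  - unfold transl in Hab; simpl in Hab. injection Hab as H1 H2.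
    exists (a - m)%Z, (b - n)%Z. rewrite !minus_IZR. f_equal; lra.
  - apply IHdeck2. apply IHdeck1. exists a, b; auto.
Qed.

Lemma transport g A c w l : deck g -> (forall x, g x = padd (app A x) c) ->
  represents w l -> represents (appZ A w) (fun t => g (l t)).
Proof.
  intros Hd Hg [u1 [u2 [k [Hk [Hl Hn]]]]].
  exists (fst (padd (app A (u1,u2)) c)), (snd (padd (app A (u1,u2)) c)), k.
  split; [auto|]. split.
  - intro t. rewrite Hg, Hl. destruct A as [[[a b] c0] d]; destruct w as [w1 w2]; destruct c as [c1 c2].
    unfold app, padd, appZ; simpl. rewrite !plus_IZR, !mult_IZR. f_equal; ring.
  - intros t Hlat. apply (Hn t). apply (deck_lat g Hd). auto.
Qed.

Lemma base p q : Z.gcd p q = 1%Z -> exists l, represents (q,p) l.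
Proof.
  intro h. destruct (Z.gcd_bezout p q 1 h) as [u [v Huv]].
  exists (fun t => (IZR u / 2 + t * 1 * IZR q, - IZR v / 2 + t * 1 * IZR p)).
  exists (IZR u / 2), (- IZR v / 2), 1. split; [lra|]. split; [reflexivity|].
  intros t [m [n Hmn]]. injection Hmn as H1 H2.
  assert (HB : IZR u * IZR p + IZR v * IZR q = 1).
  { rewrite <- !mult_IZR, <- plus_IZR, Huv. reflexivity. }
  assert (E : IZR (2 * (p * m - q * n)) = IZR 1).
  { rewrite mult_IZR, minus_IZR, !mult_IZR, <- H1, <- H2.
    transitivity (IZR u * IZR p + IZR v * IZR q); [field | exact HB]. }
  apply eq_IZR in E. lia.
Qed.

Lemma appZ_mul A B x : appZ (mmul B A) x = appZ B (appZ A x).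
Proof.
  destruct A as [[[a b] c] d]; destruct B as [[[a' b'] c'] d']; destruct x; simpl; f_equal; ring.
Qed.

Lemma forward p q v : Z.gcd p q = 1%Z -> Z.gcd (fst v) (snd v) = 1%Z -> is_lift p q v ->
  exists A, In A G6 /\ v = appZ A (q,p).
Proof.
  intros hpq hv [l [g [Hl [Hg Hv]]]].
  destruct (deck_aff g Hg) as [A [c [HA Hgx]]].
  destruct (G6_inv A HA) as [B HB].
  exists A; split; [auto|].
  destruct Hl as [u1 [u2 [k [Hk [Hl _]]]]]. destruct Hv as [u1' [u2' [k' [Hk' [Hv _]]]]].
  pose proof (appZ_mul A B (q,p)) as HAB. rewrite HB in HAB. revert HAB.
  destruct A as [[[a b] c0] d], v as [v1 v2], c as [c1 c2]. simpl in *.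
  pose proof (Hv 0) as E0; pose proof (Hv 1) as E1. rewrite Hgx, Hl in E0, E1.
  unfold app, padd in E0, E1; simpl in E0, E1.
  injection E0 as E0a E0b. injection E1 as E1a E1b.
  set (w1 := (a*q+b*p)%Z) in *. set (w2 := (c0*q+d*p)%Z) in *.
  assert (R1 : k' * IZR v1 = k * IZR w1) by (unfold w1; rewrite plus_IZR, !mult_IZR; lra).
  assert (R2 : k' * IZR v2 = k * IZR w2) by (unfold w2; rewrite plus_IZR, !mult_IZR; lra).
  assert (Cr : (v1 * w2 = v2 * w1)%Z).
  { apply eq_IZR. rewrite !mult_IZR. apply Rmult_eq_reg_l with k'; [|lra].
    transitivity (IZR w2 * (k' * IZR v1)); [ring|]. rewrite R1.
    transitivity (IZR w1 * (k * IZR w2)); [ring|]. rewrite <- R2. ring. }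
  destruct (Z.gcd_bezout v1 v2 1 hv) as [x [y Hxy]].
  set (m := (x*w1 + y*w2)%Z).
  assert (Hw1 : w1 = (m * v1)%Z).
  { unfold m. transitivity (w1 * (x*v1 + y*v2))%Z; [rewrite Hxy; ring|].
    transitivity (x*v1*w1 + y*(v1*w2))%Z; [rewrite Cr; ring| ring]. }
  assert (Hw2 : w2 = (m * v2)%Z).
  { unfold m. transitivity (w2 * (x*v1 + y*v2))%Z; [rewrite Hxy; ring|].
    transitivity (x*(v2*w1) + y*v2*w2)%Z; [rewrite <- Cr; ring| ring]. }
  intro HAB. destruct B as [[[e f] g'] h]. cbv [appZ mmul fst snd I2] in HAB. fold w1 w2 in HAB.
  injection HAB as Hq Hp.
  assert (Dq : (m | q)%Z) by (exists (e*v1+f*v2)%Z; transitivity (e*w1+f*w2)%Z; [rewrite <- Hq; clear; destruct q; reflexivity| rewrite Hw1, Hw2; ring]).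
  assert (Dp : (m | p)%Z) by (exists (g'*v1+h*v2)%Z; transitivity (g'*w1+h*w2)%Z; [rewrite <- Hp; clear; destruct p; reflexivity| rewrite Hw1, Hw2; ring]).
  assert (Dm : (m | 1)%Z) by (rewrite <- hpq; apply Z.gcd_greatest; auto).
  destruct (Z.divide_1_r _ Dm) as [Hm|Hm].
  - rewrite Hm in Hw1, Hw2. f_equal; lia.
  - exfalso. rewrite Hm in Hw1, Hw2. rewrite Hw1 in R1. rewrite Hw2 in R2.
    rewrite mult_IZR in R1, R2. simpl in R1, R2.
    assert (IZR v1 = 0) by nra. assert (IZR v2 = 0) by nra.
    apply eq_IZR in H, H0. subst. simpl in hv. discriminate.
Qed.

Ltac findin := repeat (solve [left; unfold slope_dir, rev_dir; cbn [fst snd]; f_equal; ring] || right).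

Theorem lemma5p1 (p q : Z) (hpq : Z.gcd p q = 1%Z) :
  NoDup [slope_dir p q; slope_dir q (q - p); slope_dir (p - q) p;
         rev_dir (slope_dir p q); rev_dir (slope_dir q (q - p));
         rev_dir (slope_dir (p - q) p)] /\
  (forall v : Z * Z, Z.gcd (fst v) (snd v) = 1%Z ->
    (is_lift p q v <->
     In v [slope_dir p q; slope_dir q (q - p); slope_dir (p - q) p;
           rev_dir (slope_dir p q); rev_dir (slope_dir q (q - p));
           rev_dir (slope_dir (p - q) p)])).
Proof.
  assert (nz : ~ (p = 0%Z /\ q = 0%Z)) by (intros [-> ->]; simpl in hpq; discriminate).
  split.
  - unfold slope_dir, rev_dir; simpl.
    repeat constructor; simpl; intro H; repeat destruct H as [H|H];
      try (injection H; lia); try contradiction.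
  - intros v hv; split.
    + intro HL. destruct (forward p q v hpq hv HL) as [A [HA ->]].
      simpl in HA. repeat destruct HA as [<-|HA]; try contradiction; unfold appZ; simpl fst; simpl snd; findin.
    + intro Hin. destruct (base p q hpq) as [l Hl].
      simpl in Hin; repeat destruct Hin as [<-|Hin]; try contradiction.
      * exists l, (transl 0 0). split; [exact Hl|]. split; [constructor|].
        replace (slope_dir p q) with (appZ (1,0,0,1)%Z (q,p)) by (unfold appZ, slope_dir; cbn [fst snd]; f_equal; ring).
        apply transport with (c := (IZR 0, IZR 0)); [constructor| |exact Hl].
        intros [x y]; unfold transl, app, padd; simpl; f_equal; ring.
      * exists l, (fun x => Defs.sigma (rho (rho x))). split; [exact Hl|].
        assert (D : deck (fun x => Defs.sigma (rho (rho x)))).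
        { apply (deck_comp Defs.sigma (fun x => rho (rho x))); [constructor|].
          apply (deck_comp rho rho); constructor. }
        split; [exact D|].
        replace (slope_dir q (q - p)) with (appZ (1,-1,1,0)%Z (q,p)) by (unfold appZ, slope_dir; cbn [fst snd]; f_equal; ring).
        apply transport with (g := fun x => Defs.sigma (rho (rho x))) (c := (0, -1)); [exact D| |exact Hl].
        intros [x y]; unfold Defs.sigma, rho, app, padd; simpl; f_equal; ring.
      * exists l, (fun x => Defs.sigma (rho x)). split; [exact Hl|].
        assert (D : deck (fun x => Defs.sigma (rho x))).
        { apply (deck_comp Defs.sigma rho); constructor. }
        split; [exact D|].
        replace (slope_dir (p - q) p) with (appZ (0,1,-1,1)%Z (q,p)) by (unfold appZ, slope_dir; cbn [fst snd]; f_equal; ring).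
        apply transport with (g := fun x => Defs.sigma (rho x)) (c := (0, 0)); [exact D| |exact Hl].
        intros [x y]; unfold Defs.sigma, rho, app, padd; simpl; f_equal; ring.
      * exists l, Defs.sigma. split; [exact Hl|]. split; [constructor|].
        replace (rev_dir (slope_dir p q)) with (appZ (-1,0,0,-1)%Z (q,p)) by (unfold appZ, rev_dir, slope_dir; cbn [fst snd]; f_equal; ring).
        apply transport with (c := (1, 0)); [constructor| |exact Hl].
        intros [x y]; unfold Defs.sigma, app, padd; simpl; f_equal; ring.
      * exists l, (fun x => rho (rho x)).
        assert (D : deck (fun x => rho (rho x))) by (apply (deck_comp rho rho); constructor).
        split; [exact Hl|]. split; [exact D|].
        replace (rev_dir (slope_dir q (q - p))) with (appZ (-1,1,-1,0)%Z (q,p)) by (unfold appZ, rev_dir, slope_dir; cbn [fst snd]; f_equal; ring).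
        apply transport with (g := fun x => rho (rho x)) (c := (1, 1)); [exact D| |exact Hl].
        intros [x y]; unfold rho, app, padd; simpl; f_equal; ring.
      * exists l, rho. split; [exact Hl|]. split; [constructor|].
        replace (rev_dir (slope_dir (p - q) p)) with (appZ (0,-1,1,-1)%Z (q,p)) by (unfold appZ, rev_dir, slope_dir; cbn [fst snd]; f_equal; ring).
        apply transport with (c := (1, 0)); [constructor| |exact Hl].
        intros [x y]; unfold rho, app, padd; simpl; f_equal; ring.
Qed.
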